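(* Suppose $\mathbf q$ is of type $a\in(3/2,5/2]$, let $\ell\ge1$, and let $\lambda>0$ satisfy $\lambda<\min_{k,m\ge1}k^{a-1}\big(\nu((-\infty,-k])-\nu(-k-m)\big)$ (such $\lambda$ exists). Then the process $$\widetilde M^{(\ell,\lambda)}_n=\frac{1}{h^\downarrow_\ell(P_\ell(n))}\exp\Big(\lambda\sum_{i=0}^{n-1}\frac{\mathbf 1_{P_\ell(i)\ge1}}{P_\ell(i)^{a-1}}\Big),\qquad n\ge0,$$ is a supermartingale with respect to the natural filtration of $P_\ell$.
   Context: $\mathbf q$ is a weight sequence for bipartite planar maps of type $a$: the total weight $W^{(\ell)}$ of maps with root face of degree $2\ell$ (weight $\prod_{f\ne f_r}q_{\deg f/2}$) is finite and $W^{(\ell)}\sim\frac{p_{\mathbf q}}2c_{\mathbf q}^{\ell+1}\ell^{-a}$. Let $\nu(k)=q_{k+1}c_{\mathbf q}^k$ for $k\ge0$ and $\nu(k)=2W^{(-1-k)}c_{\mathbf q}^k$ for $k<0$ (a probability measure on $\mathbb Z$). Let $h^\downarrow(p)=2^{-2p}\binom{2p}{p}$ and, for $\ell\ge1$, $h^\downarrow_\ell(p)=h^\downarrow(p)h^\downarrow(\ell)\frac{p}{p+\ell}$ for $p\ge1$ and $h^\downarrow_\ell(p)=\mathbf 1_{p=-\ell}$ for $p\le0$; $h^\downarrow_\ell$ is $\nu$-harmonic on $\mathbb Z_{\ge1}$. $(P_\ell(n))_{n\ge0}$ is the Markov chain started at $1$ with transitions $p\to p+k$ with probability $\nu(k)h^\downarrow_\ell(p+k)/h^\downarrow_\ell(p)$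 for $p\ge1$, absorbed at $-\ell$ (the perimeter process of the peeling of a Boltzmann map with root face of degree 2 and target face of degree $2\ell$). *)

(* Defs.v *)
From HB Require Import structures.
From mathcomp Require Import all_boot all_order all_algebra all_fingroup.
From mathcomp Require Import all_classical all_reals all_analysis.
Set Implicit Arguments. Unset Strict Implicit. Unset Printing Implicit Defensive.
Import Order.TTheory GRing.Theory Num.Theory.
Import numFieldNormedType.Exports.
Local Open Scope ring_scope.
Local Open Scope classical_set_scope.

Section Defs.
Variable R : realType.

(* ---------- Rooted bipartite planar maps as labelled rotation systems ------
   A map with m.+1 edges has 2(m.+1) darts, labelled by 'I_(m.*2.+2); the root
   dart is ord0.  s = vertex rotation, a = edge involution, faces = cycles of
   (a * s)%g : d |-> s (a d).  Every rooted map (trivial automorphism group)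
   has exactly (2n-1)! labellings sending its root to ord0. *)
Definition valid_map (m : nat) (s a : {perm 'I_(m.*2.+2)}) : bool :=
  [&& [forall d, (a (a d) == d) && (a d != d)],
      [forall x, forall y, connect (relU (frel s) (frel a)) x y],
      #|porbits s| + #|porbits (a * s)%g| == (m.+1 + 2)%N &
      [exists col : {ffun 'I_(m.*2.+2) -> bool},
         [forall d, (col (s d) == col d) && (col (a d) != col d)]]].

Definition map_weight (q : nat -> R) (m : nat) (s a : {perm 'I_(m.*2.+2)}) : R :=
  \prod_(F in porbits (a * s)%g | ord0 \notin F) q (#|F| %/ 2)%N.

Definition Wterm (q : nat -> R) (l m : nat) : R :=
  ((m.*2.+1)`!%:R)^-1 *
  \sum_(s : {perm 'I_(m.*2.+2)})
    \sum_(a : {perm 'I_(m.*2.+2)} |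
            valid_map s a && (#|porbit (a * s)%g ord0| == l.*2))
      map_weight q s a.

(* W^(l), as an extended real; W^(0) = 1 (vertex map) *)
Definition Wext (q : nat -> R) (l : nat) : \bar R :=
  if l == 0%N then 1%E else (\sum_(0 <= m <oo) (Wterm q l m)%:E)%E.

Definition W (q : nat -> R) (l : nat) : R := fine (Wext q l).

Definition W_ratio (q : nat -> R) (a p c : R) (l : nat) : R :=
  W q l / (p / 2 * c ^+ l.+1 * (l%:R `^ (- a))).

Definition type_a (q : nat -> R) (a p c : R) : Prop :=
  [/\ forall k, (0 < k)%N -> 0 <= q k,
      0 < p, 0 < c,
      forall l, (Wext q l < +oo)%E &
      W_ratio q a p c @ \oo --> (1 : R)].

Definition nu (q : nat -> R) (c : R) (k : int) : R :=
  if (0 <= k) then q (`|k|%N.+1) * c ^+ `|k|%N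
  else 2 * W q (`|k|%N.-1) * c ^- `|k|%N.

Definition nu_tail (q : nat -> R) (c : R) (k : nat) : R :=
  fine (\sum_(k <= j <oo) (nu q c (- j%:Z))%:E)%E.

Definition hdown (p : nat) : R := 2 ^- (p.*2) * 'C(p.*2, p)%:R.

Definition hl (l : nat) (p : int) : R :=
  if 0 < p then hdown `|p|%N * hdown l * (`|p|%N%:R / (`|p|%N%:R + l%:R))
  else (p == - l%:Z)%:R.

Definition Kl (q : nat -> R) (c : R) (l : nat) (x y : int) : R :=
  if 0 < x then nu q c (y - x) * hl l y / hl l x else (y == x)%:R.

Fixpoint path_prob_from (K : int -> int -> R) (x : int) (ys : seq int) : R :=
  if ys is y :: ys' then K x y * path_prob_from K y ys' else 1.

(* probability that (P_l(0),...,P_l(n)) = xs, for xs of size n.+1 *)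
Definition Pl_law (q : nat -> R) (c : R) (l : nat) (xs : seq int) : R :=
  if xs is x :: ys then (x == 1)%:R * path_prob_from (Kl q c l) x ys else 0.

(* the process tilde M^(l,lambda)_n as a function of the history xs of size n.+1 *)
Definition Mtilde (l : nat) (a lam : R) (n : nat) (xs : seq int) : R :=
  (hl l (last 0 xs))^-1 *
  expR (lam * \sum_(i < n) (if 0 < nth 0 xs i
                            then ((nth 0 xs i)%:~R `^ (a - 1))^-1 else 0)).

(* (Nonnegative) supermartingale w.r.t. the natural filtration of a discrete
   process with values in int, whose law on histories is Pr (Pr xs = probability
   that (X_0..X_n) = xs when size xs = n.+1), and X n is the value at time n as
   a function of the history up to time n.  Events of F_n are exactly
   {(X_0..X_n) in A} for A : set (seq int). *)
Definition nonneg_supermartingale (Pr : seq int -> R)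
    (X : nat -> seq int -> R) : Prop :=
  [/\ forall n xs, 0 <= X n xs,
      forall n, (\esum_(xs in [set xs | size xs = n.+1]) (Pr xs * X n xs)%:E
                   < +oo)%E &
      forall n (A : set (seq int)),
        (\esum_(xs in [set xs | size xs = n.+2 /\ A (take n.+1 xs)])
            (Pr xs * X n.+1 xs)%:E
         <= \esum_(xs in [set xs | size xs = n.+1 /\ A xs]) (Pr xs * X n xs)%:E)%E].

End Defs.

(* Main.v *)
Require Import Defs.
From HB Require Import structures.
From mathcomp Require Import all_boot all_order all_algebra all_fingroup.
From mathcomp Require Import all_classical all_reals all_analysis.
From mathcomp Require Import zify ring lra.
Import Order.TTheory GRing.Theory Num.Theory.
Local Open Scope ring_scope.
Local Open Scope classical_set_scope.

Lemma esum_single (R : realType) (T : choiceType) (S : set T) (f : T -> \bar R) (x0 : T) :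
  S x0 -> (0 <= f x0)%E -> (forall x, S x -> x <> x0 -> f x = 0%E) ->
  \esum_(x in S) f x = f x0.
Proof.
move=> Sx0 f0 fz.
rewrite (esumID [set x0] S); last first.
  by move=> x Sx; have [->//|nx] := eqVneq x x0; rewrite fz //; apply/eqP.
rewrite (_ : S `&` [set x0] = [set x0]); last first.
  by apply/seteqP; split => [y [_ ->]//|y ->]; split.
by rewrite esum_set1 // esum1 ?adde0 // => y [Sy ny]; apply: fz.
Qed.

Lemma esum_scale_le (R : realType) (T : choiceType) (S : set T) (C : R) (b : T -> \bar R) :
  0 <= C -> (forall x, (0 <= b x)%E) ->
  (\esum_(x in S) (C%:E * b x) <= C%:E * \esum_(x in S) b x)%E.
Proof.
move=> C0 b0; apply: ge_ereal_sup => _ [X [finX XS] <-].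
rewrite -ge0_mule_fsumr //; apply: lee_wpmul2l; first by rewrite lee_fin.
by apply: ereal_sup_ubound; exists X.
Qed.

Lemma face_half_pos (m : nat) (s a : {perm 'I_(m.*2.+2)}) F :
  valid_map s a -> F \in porbits (a * s)%g -> (0 < #|F| %/ 2)%N.
Proof.
case/and4P => _ _ _ /existsP[col /forallP Hcol].
case/imsetP => x _ ->.
have h0 := card_porbit_neq0 (a * s)%g x.
suff h1 : #|porbit (a * s)%g x| != 1%N by lia.
apply/negP => /cards1P [y Hy].
have hx := porbit_id (a * s)%g x.
have hgx := mem_porbit (a * s)%g 1 x.
rewrite Hy !inE expg1 in hx hgx.
move: hgx; rewrite -(eqP hx) permM => /eqP e.
have /andP[/eqP c1 _] := Hcol (a x).
have /andP[_ c2] := Hcol x.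
by move: c2; rewrite -c1 e eqxx.
Qed.

Lemma Wterm_ge0 (R : realType) (q : nat -> R) l m :
  (forall k, (0 < k)%N -> 0 <= q k) -> 0 <= Wterm q l m.
Proof.
move=> hq; rewrite /Wterm mulr_ge0 ?invr_ge0 ?ler0n //.
apply: sumr_ge0 => s _; apply: sumr_ge0 => b /andP[vm _].
rewrite /map_weight; apply: prodr_ge0 => F /andP[HF _].
apply: hq; exact: face_half_pos vm HF.
Qed.

Lemma W_ge0 (R : realType) (q : nat -> R) l :
  (forall k, (0 < k)%N -> 0 <= q k) -> 0 <= W q l.
Proof.
move=> hq; rewrite /W fine_ge0 // /Wext; case: ifP => _; first exact: lee01.
by apply: nneseries_ge0 => n _ _; rewrite lee_fin Wterm_ge0.
Qed.

Lemma nu_ge0 (R : realType) (q : nat -> R) c k :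
  (forall k, (0 < k)%N -> 0 <= q k) -> 0 < c -> 0 <= nu q c k.
Proof.
move=> hq c0; rewrite /nu; case: ifP => _.
  by rewrite mulr_ge0 ?exprn_ge0 ?(ltW c0) ?hq.
by rewrite !mulr_ge0 ?invr_ge0 ?exprn_ge0 ?(ltW c0) ?W_ge0.
Qed.

Lemma hdown_gt0 (R : realType) p : 0 < @hdown R p.
Proof.
rewrite /hdown mulr_gt0 // ?invr_gt0 ?exprn_gt0 // ltr0n bin_gt0.
by rewrite -addnn leq_addr.
Qed.

Lemma hl_ge0 (R : realType) l p : 0 <= @hl R l p.
Proof.
rewrite /hl; case: ifP => _; last exact: ler0n.
by rewrite !mulr_ge0 ?divr_ge0 ?addr_ge0 ?ler0n // ltW // hdown_gt0.
Qed.

Lemma hl_gt0 (R : realType) l (p : int) : 0 < p -> 0 < @hl R l p.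
Proof.
move=> p0; have hp : (0 < `|p|)%N by rewrite absz_gt0 gt_eqF.
rewrite /hl p0; apply: mulr_gt0; first by apply: mulr_gt0; apply: hdown_gt0.
by apply: divr_gt0; rewrite ?ltr_wpDr ?ler0n // ltr0n.
Qed.

Lemma hl_le0 (R : realType) l (p : int) : p <= 0 -> @hl R l p = (p == - l%:Z)%:R.
Proof. by move=> p0; rewrite /hl ltNge p0. Qed.

Lemma Kl_ge0 (R : realType) (q : nat -> R) c l x y :
  (forall k, (0 < k)%N -> 0 <= q k) -> 0 < c -> 0 <= Kl q c l x y.
Proof.
move=> hq c0; rewrite /Kl; case: ifP => _; last exact: ler0n.
by rewrite divr_ge0 ?mulr_ge0 ?nu_ge0 ?hl_ge0.
Qed.

Lemma path_prob_ge0 (R : realType) (K : int -> int -> R) x ys :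
  (forall x y, 0 <= K x y) -> 0 <= path_prob_from K x ys.
Proof.
move=> K0; elim: ys x => [|y ys IH] x /=; first exact: ler01.
by rewrite mulr_ge0.
Qed.

Lemma path_prob_rcons (R : realType) (K : int -> int -> R) x ys y :
  path_prob_from K x (rcons ys y) = path_prob_from K x ys * K (last x ys) y.
Proof.
elim: ys x => [|z ys IH] x /=; first by rewrite mulr1 mul1r.
by rewrite IH mulrA.
Qed.

Lemma Pl_ge0 (R : realType) (q : nat -> R) c l xs :
  (forall k, (0 < k)%N -> 0 <= q k) -> 0 < c -> 0 <= Pl_law q c l xs.
Proof.
move=> hq c0; case: xs => [|x ys] /=; first exact: lexx.
by rewrite mulr_ge0 ?ler0n // path_prob_ge0 // => *; apply: Kl_ge0.
Qed.

Lemma Pl_rcons (R : realType) (q : nat -> R) c l xs y : xs != [::] ->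
  Pl_law q c l (rcons xs y) = Pl_law q c l xs * Kl q c l (last 0 xs) y.
Proof.
by case: xs => [//|x ys] _ /=; rewrite path_prob_rcons mulrA.
Qed.

Definition gfun (R : realType) (a : R) (z : int) : R :=
  if 0 < z then (z%:~R `^ (a - 1))^-1 else 0.

Arguments gfun {R}.

Definition Ssum (R : realType) (a : R) (n : nat) (xs : seq int) : R :=
  \sum_(i < n) gfun a (nth 0 xs i).

Arguments Ssum {R}.

Lemma Mtilde_E (R : realType) l (a lam : R) n xs :
  @Mtilde R l a lam n xs = (hl R l (last 0 xs))^-1 * expR (lam * Ssum a n xs).
Proof. reflexivity. Qed.

Lemma Mtilde_ge0 (R : realType) l (a lam : R) n xs : 0 <= @Mtilde R l a lam n xs.
Proof. by rewrite /Mtilde mulr_ge0 ?invr_ge0 ?hl_ge0 ?expR_ge0. Qed.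

Lemma Mtilde_rcons (R : realType) l (a lam : R) n xs y : size xs = n.+1 ->
  @Mtilde R l a lam n.+1 (rcons xs y) =
  (hl R l y)^-1 * expR (lam * Ssum a n xs) * expR (lam * gfun a (last 0 xs)).
Proof.
move=> sx; rewrite Mtilde_E last_rcons /Ssum big_ord_recr /=.
have -> : \sum_(i < n) gfun a (rcons xs y)`_i = \sum_(i < n) gfun a xs`_i.
  by apply: eq_bigr => i _; rewrite nth_rcons sx ltnS ltnW.
have -> : (rcons xs y)`_n = last 0 xs.
  by rewrite nth_rcons sx ltnSn -nth_last sx.
by rewrite mulrDr expRD mulrA.
Qed.

Lemma esc (R : realType) (q : nat -> R) c l (k : nat) :
  (forall k, (0 < k)%N -> 0 <= q k) -> 0 < c ->
  (\esum_(j in [set: int]) (nu q c j)%:E = 1)%E ->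
  \esum_(y in [set: int]) (nu q c (y - k%:Z) * (hl R l y * (hl R l y)^-1))%:E =
  (1 - (nu_tail q c k - nu q c (- (k + l)%:Z)))%:E.
Proof.
move=> hq c0 hnu.
set u := fun y : int => (nu q c (y - k%:Z))%:E.
have u0 : forall y, (0 <= u y)%E by move=> y; rewrite lee_fin nu_ge0.
have h1 : (\esum_(y in [set: int]) u y = 1)%E.
  rewrite -hnu (reindex_esum [set: int] [set: int] (fun y : int => y - k%:Z) (fun j => (nu q c j)%:E)) //.
  split => //; first by move=> y z _ _ e; rewrite -(subrK k%:Z y) e subrK.
  by move=> j _; exists (j + k%:Z) => //; rewrite addrK.
set NZ := [set y : int | hl R l y != 0].
have h2 := esumID NZ [set: int] u (fun y _ => u0 y).
have h3 : \esum_(y in [set: int]) (nu q c (y - k%:Z) * (hl R l y * (hl R l y)^-1))%:E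
        = (\esum_(y in [set: int] `&` NZ) u y)%E.
  rewrite esum_mkcondr; apply: eq_esum => y _; rewrite /u.
  have -> : (y \in NZ) = (hl R l y != 0) by apply/idP/idP => [/set_mem|/mem_set].
  case: ifP => [h|/negbFE/eqP ->]; last by rewrite mul0r mulr0.
  by rewrite mulfV ?mulr1.
set Q := [set y : int | y <= 0].
have h4 : (\sum_(k <= j <oo) (nu q c (- j%:Z))%:E =
           \esum_(y in [set: int] `&` ~` NZ) u y + (nu q c (- (k + l)%:Z))%:E)%E.
  rewrite ereal_series nneseries_esum; last by move=> j _; rewrite lee_fin nu_ge0.
  have -> : (\esum_(j in [set j | (k <= j)%N]) (nu q c (- j%:Z))%:E =
             \esum_(y in Q) u y)%E.
    rewrite (reindex_esum [set j | (k <= j)%N] Q (fun j : nat => k%:Z - j%:Z)).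
      by apply: eq_esum => j _; rewrite /u addrAC subrr add0r.
    split.
    - by move=> j /=; rewrite /Q /=; lia.
    - by move=> i j /= _ _; lia.
    - move=> y; rewrite /Q /= => y0; exists (k + `|y|)%N; first by rewrite /=; lia.
      by lia.
  rewrite (esumID [set - (l%:Z)] Q) /=; last by move=> y _; exact: u0.
  rewrite addeC; congr (_ + _)%E.
    congr esum; apply/seteqP; split => y /=.
      rewrite /Q /NZ /= => -[y0 yl]; split => //; apply/negP; rewrite negbK.
      by rewrite hl_le0 // pnatr_eq0 eqb0; apply/eqP.
    rewrite /Q /NZ /= => -[_ /negP]; rewrite negbK => /eqP hy.
    have y0 : y <= 0 by rewrite leNgt; apply/negP => /(hl_gt0 R l); rewrite hy ltxx.
    split => //; move: hy; rewrite hl_le0 // => /eqP; rewrite pnatr_eq0 eqb0.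
    by move=> /eqP.
  rewrite (_ : Q `&` _ = [set - (l%:Z)]); last first.
    apply/seteqP; split => y /=; first by case.
    by move=> ->; split => //; rewrite /Q /=; lia.
  by rewrite esum_set1 // /u; congr (nu q c _)%:E; lia.
rewrite h3 /nu_tail h4.
move: h1; rewrite h2.
have E0 : (0 <= \esum_(y in [set: int] `&` NZ) u y)%E by apply: esum_ge0 => y _; apply: u0.
have Z0 : (0 <= \esum_(y in [set: int] `&` ~` NZ) u y)%E by apply: esum_ge0 => y _; apply: u0.
move: (\esum_(y in [set: int] `&` NZ) u y)%E (\esum_(y in [set: int] `&` ~` NZ) u y)%E E0 Z0.
move=> [e| |] [z| |] //= _ _.
- move=> /eqP; rewrite -EFinD eqe => /eqP he.
  congr (_%:E); lra.
Qed.

Lemma inner_step (R : realType) (q : nat -> R) (a c : R) (l : nat) (lam : R) n xs :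
  (forall k, (0 < k)%N -> 0 <= q k) -> 0 < c ->
  (\esum_(j in [set: int]) (nu q c j)%:E = 1)%E ->
  (forall k m : nat, (0 < k)%N -> (0 < m)%N ->
     lam < k%:R `^ (a - 1) * (nu_tail q c k - nu q c (- (k + m)%:Z))) ->
  (0 < l)%N ->
  size xs = n.+1 ->
  (\esum_(y in [set: int]) (Pl_law q c l (rcons xs y) * @Mtilde R l a lam n.+1 (rcons xs y))%:E
   <= (Pl_law q c l xs * @Mtilde R l a lam n xs)%:E)%E.
Proof.
move=> hq c0 hnu hlam l0 sx.
have xs0 : xs != [::] by case: xs sx.
under eq_esum => y _ do rewrite Pl_rcons // Mtilde_rcons //.
rewrite Mtilde_E.
set x := last 0 xs; set P := Pl_law q c l xs; set E0 := expR (lam * Ssum a n xs).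
have P0 : 0 <= P by apply: Pl_ge0.
have E00 : 0 <= E0 by apply: expR_ge0.
case: (leP x 0) => xle.
  rewrite (@esum_single _ _ _ _ x) //.
  - rewrite /Kl ltNge xle /= eqxx /gfun ltNge xle /= mulr0 expR0 mulr1 mulr1.
    by rewrite mulrA.
  - by rewrite lee_fin !mulr_ge0 ?Kl_ge0 ?invr_ge0 ?hl_ge0 ?expR_ge0.
  - move=> y _ /eqP yx; rewrite /Kl ltNge xle /=.
    by rewrite (negbTE yx) mulr0 mul0r.
have [k ek] : exists k : nat, x = k%:Z by exists `|x|%N; rewrite gtz0_abs.
have k0 : (0 < k)%N by move: xle; rewrite ek; lia.
set G := expR (lam * gfun a x).
have G0 : 0 <= G by apply: expR_ge0.
have hx : 0 < hl R l x by apply: hl_gt0.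
rewrite (eq_esum (b := fun y => ((P * (hl R l x)^-1 * E0 * G) *
   (nu q c (y - k%:Z) * (hl R l y * (hl R l y)^-1)))%:E)); last first.
  by move=> y _; rewrite /Kl xle; congr (_%:E); rewrite -ek; ring.
under eq_esum => y _ do rewrite EFinM.
apply: le_trans; first apply: esum_scale_le.
- by rewrite !mulr_ge0 ?invr_ge0 // ltW.
- by move=> y; rewrite lee_fin mulr_ge0 ?nu_ge0 ?mulr_ge0 ?invr_ge0 ?hl_ge0.
rewrite esc // -EFinM lee_fin.
set t := nu_tail q c k - nu q c (- (k + l)%:Z).
have st : lam * gfun a x < t.
  have := hlam k l k0 l0; rewrite /gfun xle ek.
  have pk : 0 < (k%:R : R) `^ (a - 1) by apply: powR_gt0; rewrite ltr0n.
  by move=> h; rewrite ltr_pdivrMr // mulrC.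
have Gt : G * (1 - t) <= 1.
  apply: le_trans (_ : G * expR (- t) <= 1).
    by apply: ler_wpM2l => //; have := expR_ge1Dx (- t); rewrite addrC.
  by rewrite /G -expRD expR_le1; lra.
rewrite (_ : P / hl R l x * E0 * G * (1 - t) = (P / hl R l x * E0) * (G * (1 - t))); last by ring.
apply: le_trans (_ : (P / hl R l x * E0) * 1 <= _); last by rewrite mulr1 mulrA.
by apply: ler_wpM2l => //; rewrite !mulr_ge0 ?invr_ge0 // ltW.
Qed.

Lemma step3 (R : realType) (q : nat -> R) (a c : R) (l : nat) (lam : R) n (A : set (seq int)) :
  (forall k, (0 < k)%N -> 0 <= q k) -> 0 < c ->
  (\esum_(j in [set: int]) (nu q c j)%:E = 1)%E ->
  (forall k m : nat, (0 < k)%N -> (0 < m)%N ->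
     lam < k%:R `^ (a - 1) * (nu_tail q c k - nu q c (- (k + m)%:Z))) ->
  (0 < l)%N ->
  (\esum_(xs in [set xs | size xs = n.+2 /\ A (take n.+1 xs)])
      (Pl_law q c l xs * @Mtilde R l a lam n.+1 xs)%:E
   <= \esum_(xs in [set xs | size xs = n.+1 /\ A xs]) (Pl_law q c l xs * @Mtilde R l a lam n xs)%:E)%E.
Proof.
move=> hq c0 hnu hlam l0.
set F := fun zs => (Pl_law q c l zs * @Mtilde R l a lam n.+1 zs)%:E.
rewrite (reindex_esum ([set xs | size xs = n.+1 /\ A xs] `*`` (fun _ => [set: int]))
  _ (fun p => rcons p.1 p.2) F); last first.
  split.
  - move=> [xs y] /= [[sx Ax] _]; rewrite size_rcons sx; split => //.
    by rewrite -cats1 take_size_cat.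
  - by move=> [x1 y1] [x2 y2] _ _ /= /rcons_inj [-> ->].
  - move=> zs /= [sz Az]; move: sz Az; case/lastP: zs => [//|s y].
    rewrite size_rcons => /eqP; rewrite eqSS => /eqP ss.
    have -> : take n.+1 (rcons s y) = s by rewrite -cats1 take_size_cat.
    by move=> As; exists (s, y).
rewrite -(esum_esum (a := fun xs y => F (rcons xs y))); last first.
  by move=> xs y _ _; rewrite /F lee_fin mulr_ge0 ?Pl_ge0 ?Mtilde_ge0.
apply: le_esum => xs [sx _].
exact: inner_step.
Qed.

Theorem mainTheorem7 (R : realType) (q : nat -> R) (a p c : R) (l : nat) (lam : R) :
  type_a q a p c ->
  3 / 2 < a <= 5 / 2 ->
  (\esum_(k in [set: int]) (nu q c k)%:E = 1)%E ->
  (forall x : int, 0 < x ->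
     (\esum_(k in [set: int]) (nu q c k * @hl R l (x + k))%:E = (@hl R l x)%:E)%E) ->
  (0 < l)%N ->
  0 < lam ->
  (forall k m : nat, (0 < k)%N -> (0 < m)%N ->
     lam < k%:R `^ (a - 1) * (nu_tail q c k - nu q c (- (k + m)%:Z))) ->
  nonneg_supermartingale (Pl_law q c l) (@Mtilde R l a lam).
Proof.
move=> [hq _ c0 _ _] _ hnu _ l0 _ hlam.
have S3 := fun n A => @step3 R q a c l lam n A hq c0 hnu hlam l0.
split.
- by move=> n xs; apply: Mtilde_ge0.
- elim => [|n IH].
    rewrite (@esum_single _ _ _ _ [:: 1]) ?ltry //.
    + by rewrite lee_fin mulr_ge0 ?Pl_ge0 ?Mtilde_ge0.
    + move=> [|x [|? ?]] //= _ hx.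
      have -> : (x == 1) = false by apply/negbTE/eqP => ex; apply: hx; rewrite ex.
      by rewrite mul0r mul0r.
  apply: le_lt_trans IH.
  have := S3 n setT.
  rewrite (_ : [set xs | size xs = n.+2 /\ setT (take n.+1 xs)] = [set xs | size xs = n.+2]).
    rewrite (_ : [set xs | size xs = n.+1 /\ setT xs] = [set xs | size xs = n.+1]) //.
    by apply/seteqP; split => xs /=; [case|].
  by apply/seteqP; split => xs /=; [case|].
- exact: S3.
Qed.
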